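(* Let $\Lambda=K\mathcal{Q}/I$ be a finite-dimensional algebra over a field $K$ as in the context, let $A\geqslant1$ and let $\tilde{\Lambda}=\tilde{\Lambda}_A$ be its stretched algebra, $\varepsilon=\sum_{u\in\mathcal{Q}_0}u\in\tilde{\Lambda}$ and $B=\varepsilon\tilde{\Lambda}\varepsilon$. Let $w$ be a vertex of $\tilde{\mathcal{Q}}_A$ not in $\mathcal{Q}_0$, and let $v=\mathfrak{o}(\tilde{p}_w)$, $v'=\mathfrak{t}(\tilde{q}_w)$. Then: (1) $v'B\cong\tilde{q}_wB$ as right $B$-modules; (2) $v'\tilde{\Lambda}\cong\tilde{q}_w\tilde{\Lambda}$ as right $\tilde{\Lambda}$-modules; (3) $Bv\cong B\tilde{p}_w$ as left $B$-modules; (4) $\tilde{\Lambda}v\cong\tilde{\Lambda}\tilde{p}_w$ as left $\tilde{\Lambda}$-modules.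
   Context: Conventions: $\mathcal{Q}$ is a finite quiver with vertex set $\mathcal{Q}_0$; $\mathfrak{o}(\alpha)$, $\mathfrak{t}(\alpha)$ denote start and end of an arrow or path; paths are written left to right. An element $x\in K\mathcal{Q}$ is uniform if $x=vx=xv'$ for vertices $v,v'$. $\Lambda=K\mathcal{Q}/I$ is finite-dimensional with $I$ an admissible ideal generated by a minimal set $\{g^2_1,\dots,g^2_m\}$ of uniform elements. Stretched algebra: for $A\geqslant1$, the quiver $\tilde{\mathcal{Q}}_A$ has all vertices of $\mathcal{Q}$ plus, for each arrow $\alpha$ of $\mathcal{Q}$, new vertices $w_1,\dots,w_{A-1}$; each arrow $\alpha$ is replaced by arrows $\alpha_1,\dots,\alpha_A$ with $\mathfrak{o}(\alpha_1)=\mathfrak{o}(\alpha)$, $\mathfrak{t}(\alpha_j)=\mathfrak{o}(\alpha_{j+1})=w_j$ ($1\le j\le A-1$), $\mathfrak{t}(\alpha_A)=\mathfrak{t}(\alpha)$, and the only arrows incident with $w_j$ are $\alpha_j,\alpha_{j+1}$. $\theta^*:K\mathcal{Q}\to K\tilde{\mathcal{Q}}_A$ is the algebra homomorphism fixing vertices and sending $\alpha\mapsto\alpha_1\cdots\alpha_A$; $\tilde{I}_A$ is the ideal generated by $\theta^*(g^2_1),\dots,\theta^*(g^2_m)$; $\tilde{\Lambda}_A=K\tilde{\mathcal{Q}}_A/\tilde{I}_A$. For a new vertex $w=w_i$ on the path replacing the arrow $\alpha$, $\tilde{p}_w=\alpha_1\cdots\alpha_i$ and $\tilde{q}_w=\alpha_{i+1}\cdots\alpha_A$,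 viewed in $\tilde{\Lambda}$; thus $\mathfrak{o}(\tilde{p}_w)=\mathfrak{o}(\alpha)$, $\mathfrak{t}(\tilde{q}_w)=\mathfrak{t}(\alpha)$. *)

(* Defs.v *)
From HB Require Import structures.
From mathcomp Require Import all_boot all_order all_algebra.
Set Implicit Arguments. Unset Strict Implicit. Unset Printing Implicit Defensive.
Import GRing.Theory.
Local Open Scope ring_scope.

(* Paths are written left to right: (v, [a1; ...; ak]) with            *)
(* src a1 = v and tgt a_i = src a_(i+1); (v, [::]) is the vertex v.    *)
Section PathAlgebra.
Variables (K : fieldType) (V E : finType) (src tgt : E -> V).

Definition rpath := (V * seq E)%type.

Definition rvalid (p : rpath) : bool :=
  match p.2 with
  | [::] => true
  | a :: s => (src a == p.1) && path (fun x y => tgt x == src y) a s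
  end.

Definition qpath := {p : rpath | rvalid p}.

Definition rsrc (p : rpath) : V := p.1.
Definition rtgt (p : rpath) : V := last p.1 (map tgt p.2).
Definition plen (p : qpath) : nat := size (val p).2.

(* an element of KQ is given by its coefficient function on paths *)
Definition KQ := qpath -> K.

Definition fin_supp (x : KQ) : Prop :=
  exists s : seq qpath, forall p, p \notin s -> x p = 0.

(* coefficient at a raw pair, 0 if it is not a path *)
Definition ext (x : KQ) (r : rpath) : K :=
  if (insub r : option qpath) is Some p then x p else 0.

Definition pel (r : rpath) : KQ := fun p => (val p == r)%:R.
Definition vtx (u : V) : KQ := pel (u, [::]).

Definition kq0 : KQ := fun _ => 0.
Definition kqadd (x y : KQ) : KQ := fun p => x p + y p.
Definition kqopp (x : KQ) : KQ := fun p => - x p.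

(* multiplication: concatenation of paths, extended bilinearly *)
Definition kqmul (x y : KQ) : KQ := fun p =>
  \sum_(k < (size (val p).2).+1)
     ext x ((val p).1, take k (val p).2) *
     ext y (rtgt ((val p).1, take k (val p).2), drop k (val p).2).

Fixpoint kqsum (n : nat) (F : nat -> KQ) : KQ :=
  if n is n'.+1 then kqadd (kqsum n' F) (F n') else kq0.

Definition in_ideal (gs : seq KQ) (x : KQ) : Prop :=
  exists (n : nat) (a b : nat -> KQ) (j : nat -> nat),
    (forall i, (i < n)%N -> [/\ fin_supp (a i), fin_supp (b i) & (j i < size gs)%N]) /\
    x =1 kqsum n (fun i => kqmul (kqmul (a i) (nth kq0 gs (j i))) (b i)).

Definition eqmod (gs : seq KQ) (x y : KQ) : Prop := in_ideal gs (kqadd x (kqopp y)).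

Definition uniform (x : KQ) : Prop :=
  exists v v' : V, x =1 kqmul (vtx v) x /\ x =1 kqmul x (vtx v').

(* the ideal generated by gs is admissible: J^N <= I <= J^2,
   J the arrow ideal (J^k is spanned by the paths of length >= k) *)
Definition admissible (gs : seq KQ) : Prop :=
  (forall x, in_ideal gs x -> forall p, (plen p < 2)%N -> x p = 0) /\
  (exists N : nat, forall p, (N <= plen p)%N -> in_ideal gs (pel (val p))).

Definition minimal_gens (gs : seq KQ) : Prop :=
  forall i, (i < size gs)%N ->
    ~ in_ideal (take i gs ++ drop i.+1 gs) (nth kq0 gs i).

(* elements of the quotient algebra KQ/<gs> *)
Definition elt (x : KQ) : Prop := fin_supp x.

(* m lies in the right module x R (resp. left module R x) inside KQ/<gs>,
   where R is a set of elements (given by representatives) *)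
Definition in_rmod (gs : seq KQ) (R : KQ -> Prop) (x m : KQ) : Prop :=
  exists r, elt r /\ R r /\ eqmod gs m (kqmul x r).
Definition in_lmod (gs : seq KQ) (R : KQ -> Prop) (x m : KQ) : Prop :=
  exists r, elt r /\ R r /\ eqmod gs m (kqmul r x).

Definition rmod_iso (gs : seq KQ) (R : KQ -> Prop) (x y : KQ) : Prop :=
  exists phi : KQ -> KQ,
    (forall m, in_rmod gs R x m -> in_rmod gs R y (phi m)) /\
    (forall m m', in_rmod gs R x m -> in_rmod gs R x m' ->
        eqmod gs m m' -> eqmod gs (phi m) (phi m')) /\
    (forall m m', in_rmod gs R x m -> in_rmod gs R x m' ->
        eqmod gs (phi (kqadd m m')) (kqadd (phi m) (phi m'))) /\
    (forall m r, in_rmod gs R x m -> elt r -> R r ->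
        eqmod gs (phi (kqmul m r)) (kqmul (phi m) r)) /\
    (forall m m', in_rmod gs R x m -> in_rmod gs R x m' ->
        eqmod gs (phi m) (phi m') -> eqmod gs m m') /\
    (forall n, in_rmod gs R y n -> exists m, in_rmod gs R x m /\ eqmod gs (phi m) n).

Definition lmod_iso (gs : seq KQ) (R : KQ -> Prop) (x y : KQ) : Prop :=
  exists phi : KQ -> KQ,
    (forall m, in_lmod gs R x m -> in_lmod gs R y (phi m)) /\
    (forall m m', in_lmod gs R x m -> in_lmod gs R x m' ->
        eqmod gs m m' -> eqmod gs (phi m) (phi m')) /\
    (forall m m', in_lmod gs R x m -> in_lmod gs R x m' ->
        eqmod gs (phi (kqadd m m')) (kqadd (phi m) (phi m'))) /\
    (forall m r, in_lmod gs R x m -> elt r -> R r ->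
        eqmod gs (phi (kqmul r m)) (kqmul r (phi m))) /\
    (forall m m', in_lmod gs R x m -> in_lmod gs R x m' ->
        eqmod gs (phi m) (phi m') -> eqmod gs m m') /\
    (forall n, in_lmod gs R y n -> exists m, in_lmod gs R x m /\ eqmod gs (phi m) n).

End PathAlgebra.

(* New vertices: inr (a, j), j : 'I_(A-1), is the vertex w_(j+1) on    *)
(* the path replacing the arrow a.  Arrows: (a, i), i : 'I_A, is the   *)
(* arrow a_(i+1).                                                      *)
Section Stretch.
Variables (V E : finType) (src tgt : E -> V) (A : nat).

Definition sV : finType := (V + (E * 'I_A.-1))%type.
Definition sE : finType := (E * 'I_A)%type.

Definition ssrc (e : sE) : sV :=
  let: (a, i) := e in
  if (val i == 0)%N then inl (src a)
  else if (insub (val i).-1 : option 'I_A.-1) is Some j then inr (a, j)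
       else inl (src a).

Definition stgt (e : sE) : sV :=
  let: (a, i) := e in
  if (insub (val i) : option 'I_A.-1) is Some j then inr (a, j)
  else inl (tgt a).

Definition stretch (a : E) : seq sE := [seq (a, i) | i <- enum 'I_A].

Definition stretch_path (r : rpath V E) : rpath sV sE :=
  (inl r.1, flatten (map stretch r.2)).

Definition destretch (r : rpath sV sE) : option (rpath V E) :=
  match r.1 with
  | inl v =>
      let s' := [seq x.1 | x <- r.2 & (val x.2 == 0)%N] in
      if flatten (map stretch s') == r.2 then Some (v, s') else None
  | inr _ => None
  end.

(* theta^* : K Q -> K Q~_A, the linear extension of stretch_path
   (it is the algebra homomorphism fixing vertices, alpha |-> alpha_1..alpha_A) *)
Definition theta (K : fieldType) (x : KQ K src tgt) : KQ K ssrc stgt :=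
  fun p => if destretch (val p) is Some r then ext x r else 0.

(* p~_w = alpha_1 ... alpha_(j+1) and q~_w = alpha_(j+2) ... alpha_A
   for w = w_(j+1) = inr (a, j) *)
Definition ptil_raw (w : sV) : rpath sV sE :=
  match w with
  | inl u => (inl u, [::])
  | inr (a, j) => (inl (src a), [seq (a, i) | i <- enum 'I_A & (val i <= val j)%N])
  end.
Definition qtil_raw (w : sV) : rpath sV sE :=
  match w with
  | inl u => (inl u, [::])
  | inr (a, j) => (w, [seq (a, i) | i <- enum 'I_A & (val j < val i)%N])
  end.

Definition ptil (K : fieldType) (w : sV) : KQ K ssrc stgt := @pel K _ _ ssrc stgt (ptil_raw w).
Definition qtil (K : fieldType) (w : sV) : KQ K ssrc stgt := @pel K _ _ ssrc stgt (qtil_raw w).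

Definition epsQ (K : fieldType) : KQ K ssrc stgt :=
  fun p => \sum_(u : V) @vtx K _ _ ssrc stgt (inl u) p.

(* representatives of elements of B = eps Lambda~ eps *)
Definition inB (K : fieldType) (r : KQ K ssrc stgt) : Prop :=
  exists c, fin_supp c /\ r =1 kqmul (kqmul (epsQ K) c) (epsQ K).

Definition inLam (K : fieldType) (r : KQ K ssrc stgt) : Prop := True.

End Stretch.

(* Main.v *)
Require Import Defs.
From mathcomp Require Import all_boot all_order all_algebra.
From mathcomp Require Import zify.
Set Implicit Arguments. Unset Strict Implicit. Unset Printing Implicit Defensive.
Import GRing.Theory.
Local Open Scope ring_scope.

Section Gen.
Variables (K : fieldType) (V E : finType) (src tgt : E -> V).

Local Notation rpath := (rpath V E).
Local Notation qpath := (qpath src tgt).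
Local Notation KQ := (KQ K src tgt).
Local Notation rvalid := (rvalid src tgt).
Local Notation rtgt := (rtgt tgt).
Local Notation ext := (@ext K V E src tgt).
Local Notation kqmul := (@kqmul K V E src tgt).
Local Notation kqadd := (@kqadd K V E src tgt).
Local Notation kqopp := (@kqopp K V E src tgt).
Local Notation kq0 := (@kq0 K V E src tgt).
Local Notation kqsum := (@kqsum K V E src tgt).
Local Notation pel := (@pel K V E src tgt).
Local Notation vtx := (@vtx K V E src tgt).

Lemma ext_val (x : KQ) (p : qpath) : ext x (val p) = x p.
Proof. by rewrite /ext valK. Qed.

Lemma ext_inv (x : KQ) r : ~~ rvalid r -> ext x r = 0.
Proof. by move=> h; rewrite /ext insubN. Qed.

Lemma rtgt_cat (v : V) s1 s2 : rtgt (v, s1 ++ s2) = rtgt (rtgt (v, s1), s2).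
Proof. by rewrite /Defs.rtgt /= map_cat last_cat. Qed.

Lemma rvalid_cat (v : V) s1 s2 :
  rvalid (v, s1 ++ s2) = rvalid (v, s1) && rvalid (rtgt (v, s1), s2).
Proof.
case: s1 => [|a s1] /=; first by [].
rewrite /Defs.rvalid /Defs.rtgt /= cat_path -andbA; congr (_ && (_ && _)).
rewrite (last_map tgt s1 a).
by case: s2 => [|b s2] //=; rewrite eq_sym.
Qed.

Lemma rvalid_split (v : V) s k :
  rvalid (v, s) = rvalid (v, take k s) && rvalid (rtgt (v, take k s), drop k s).
Proof. by rewrite -rvalid_cat cat_take_drop. Qed.

Lemma ext_nz (x : KQ) r : ext x r != 0 -> exists p : qpath, val p = r /\ x p != 0.
Proof.
rewrite /ext; case: insubP => [p _ <- h|]; last by rewrite eqxx.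
by exists p.
Qed.

Lemma ext_zero (x : KQ) r : (forall p : qpath, val p = r -> x p = 0) -> ext x r = 0.
Proof. by move=> h; rewrite /ext; case: insubP => // p _ /h. Qed.

Lemma ext_add (x y : KQ) r : ext (kqadd x y) r = ext x r + ext y r.
Proof. by rewrite /ext; case: insubP => // _; rewrite addr0. Qed.

Lemma ext_opp (x : KQ) r : ext (kqopp x) r = - ext x r.
Proof. by rewrite /ext; case: insubP => // _; rewrite oppr0. Qed.

Lemma ext0 r : ext kq0 r = 0.
Proof. by rewrite /ext; case: insubP. Qed.

Lemma ext_eq (x y : KQ) r : x =1 y -> ext x r = ext y r.
Proof. by move=> h; rewrite /ext; case: insubP. Qed.

Lemma kqsumE n F p : kqsum n F p = \sum_(i < n) F i p.
Proof.
elim: n => [|n IH] /=; first by rewrite big_ord0.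
by rewrite /Defs.kqadd IH big_ord_recr.
Qed.

Lemma ext_sum n F r : ext (kqsum n F) r = \sum_(i < n) ext (F i) r.
Proof.
rewrite /ext; case: insubP => [p _ _|_]; first by rewrite kqsumE.
by rewrite big1.
Qed.

Definition M (x y : KQ) (r : rpath) : K :=
  \sum_(0 <= k < (size r.2).+1)
     ext x (r.1, take k r.2) * ext y (rtgt (r.1, take k r.2), drop k r.2).

Lemma kqmulE x y p : kqmul x y p = M x y (val p).
Proof. by rewrite /Defs.kqmul /M big_mkord. Qed.

Lemma ext_mul x y r : ext (kqmul x y) r = M x y r.
Proof.
case h: (rvalid r).
  by rewrite /ext insubT /= kqmulE.
rewrite ext_inv ?h // /M big1 // => k _.
case: r h => v s /= h.
move: h; rewrite (rvalid_split v s k); case/nandP => h.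
  by rewrite (ext_inv x h) mul0r.
by rewrite (ext_inv y h) mulr0.
Qed.


Lemma kqmulA x y z : kqmul (kqmul x y) z =1 kqmul x (kqmul y z).
Proof.
move=> p; rewrite !kqmulE; case: (val p) => v s; rewrite /M /=.
set n := size s.
pose F l k := ext x (v, take l s) * ext y (rtgt (v, take l s), take (k - l) (drop l s))
              * ext z (rtgt (v, take k s), drop k s).
transitivity (\sum_(0 <= k < n.+1) \sum_(0 <= l < n.+1) (if (l <= k)%N then F l k else 0)).
  apply: eq_big_nat => k /andP [_ hk].
  rewrite ext_mul /M /= size_takel // mulr_suml.
  rewrite (big_nat_widen _ _ _ _ _ hk) big_mkcond /=.
  apply: eq_big_nat => l /andP [_ hl]; rewrite ltnS.
  case: ifP => // hlk.
  rewrite /F take_takel // take_drop subnK //.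
transitivity (\sum_(0 <= l < n.+1) \sum_(0 <= k < n.+1) (if (l <= k)%N then F l k else 0)).
  exact: exchange_big_nat.
apply: eq_big_nat => l /andP [_ hl].
rewrite ext_mul /M /= size_drop mulr_sumr.
rewrite -big_mkcond /=.
transitivity (\sum_(0 + l <= k < n.+1) F l k).
  by rewrite (big_nat_widenl _ _ _ _ _ (leq0n l)).
rewrite (big_addn 0 _ l) -subSn //.
apply: eq_big_nat => m _.
by rewrite /F addnK mulrA -rtgt_cat -takeD drop_drop (addnC m l).
Qed.


Lemma kqmul_eql x x' y : x =1 x' -> kqmul x y =1 kqmul x' y.
Proof.
move=> h p; rewrite !kqmulE /M; apply: eq_bigr => k _.
by rewrite (ext_eq _ h).
Qed.

Lemma kqmul_eqr x y y' : y =1 y' -> kqmul x y =1 kqmul x y'.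
Proof.
move=> h p; rewrite !kqmulE /M; apply: eq_bigr => k _.
by rewrite (ext_eq _ h).
Qed.

Lemma kqmulDl x y z : kqmul (kqadd x y) z =1 kqadd (kqmul x z) (kqmul y z).
Proof.
move=> p; rewrite /Defs.kqadd !kqmulE /M -big_split /=; apply: eq_bigr => k _.
by rewrite ext_add mulrDl.
Qed.

Lemma kqmulDr x y z : kqmul x (kqadd y z) =1 kqadd (kqmul x y) (kqmul x z).
Proof.
move=> p; rewrite /Defs.kqadd !kqmulE /M -big_split /=; apply: eq_bigr => k _.
by rewrite ext_add mulrDr.
Qed.

Lemma kqmulNl x y : kqmul (kqopp x) y =1 kqopp (kqmul x y).
Proof.
move=> p; rewrite /Defs.kqopp !kqmulE /M -sumrN; apply: eq_bigr => k _.
by rewrite ext_opp mulNr.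
Qed.

Lemma kqmulNr x y : kqmul x (kqopp y) =1 kqopp (kqmul x y).
Proof.
move=> p; rewrite /Defs.kqopp !kqmulE /M -sumrN; apply: eq_bigr => k _.
by rewrite ext_opp mulrN.
Qed.

Lemma kqmul0l y : kqmul kq0 y =1 kq0.
Proof. by move=> p; rewrite kqmulE /M big1 // => k _; rewrite ext0 mul0r. Qed.

Lemma kqmul0r x : kqmul x kq0 =1 kq0.
Proof. by move=> p; rewrite kqmulE /M big1 // => k _; rewrite ext0 mulr0. Qed.

Lemma ext_pel q r : ext (pel q) r = ((r == q) && rvalid r)%:R.
Proof.
rewrite /ext; case: insubP => [p h <-|h].
  have -> : rvalid (val p) = true by exact: (valP p).
  by rewrite /Defs.pel andbT.
have -> : rvalid r = false by exact: (negbTE h).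
by rewrite andbF.
Qed.

Lemma kqmul_vtxl u x : kqmul (vtx u) x =1 fun p => if rsrc (val p) == u then x p else 0.
Proof.
move=> p; rewrite kqmulE -ext_val /rsrc; case: (val p) => v s /=.
rewrite /M /= big_nat_recl // big_nat big1 => [|k /andP [_ hk]].
  rewrite addr0 /vtx ext_pel take0 drop0 /= andbT xpair_eqE eqxx andbT.
  by case: (v == u); rewrite ?mul1r ?mul0r.
by rewrite /vtx ext_pel xpair_eqE; case: s hk => //= a s _; rewrite andbF mul0r.
Qed.

Lemma kqmul_vtxr u x : kqmul x (vtx u) =1 fun p => if rtgt (val p) == u then x p else 0.
Proof.
move=> p; rewrite kqmulE -ext_val; case: (val p) => v s /=.
rewrite /M /= big_nat_recr // big_nat big1 => [|k /andP [_ hk]].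
  rewrite /= add0r /vtx ext_pel take_size drop_size /= andbT xpair_eqE eqxx andbT.
  by case: (_ == u); rewrite ?mulr1 ?mulr0.
have hd : (drop k s == [::]) = false.
  by apply/negbTE; rewrite -size_eq0 size_drop subn_eq0 -ltnNge.
by rewrite /vtx ext_pel xpair_eqE hd andbF andFb mulr0.
Qed.

Lemma fin_supp_pel q : fin_supp (pel q).
Proof.
exists (pmap insub [:: q]) => p; rewrite /Defs.pel mem_pmap /=.
by case: eqP => // <-; rewrite valK inE eqxx.
Qed.

Lemma fin_supp_vtx u : fin_supp (vtx u).
Proof. exact: fin_supp_pel. Qed.

Lemma fin_supp_opp x : fin_supp x -> fin_supp (kqopp x).
Proof. by case=> s hs; exists s => p /hs; rewrite /Defs.kqopp => ->; rewrite oppr0. Qed.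

Lemma fin_supp_mul x y : fin_supp x -> fin_supp y -> fin_supp (kqmul x y).
Proof.
case=> sx hsx [sy hsy].
exists (pmap (fun ab : qpath * qpath => insub ((val ab.1).1, (val ab.1).2 ++ (val ab.2).2))
          [seq (a, b) | a <- sx, b <- sy]) => p hp.
rewrite kqmulE /M big1 // => k _.
have [hx|hx] := eqVneq (ext x ((val p).1, take k (val p).2)) 0; first by rewrite hx mul0r.
have [hy|hy] := eqVneq (ext y (rtgt ((val p).1, take k (val p).2), drop k (val p).2)) 0.
  by rewrite hy mulr0.
exfalso; move: hp => /negP; apply.
case: (ext_nz hx) => p1 [e1 h1]; case: (ext_nz hy) => p2 [e2 h2].
have m1 : p1 \in sx by apply: contraNT h1 => /hsx ->.
have m2 : p2 \in sy by apply: contraNT h2 => /hsy ->.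
rewrite mem_pmap; apply/mapP; exists (p1, p2); first exact: allpairs_f.
by rewrite /= e1 e2 /= cat_take_drop -surjective_pairing valK.
Qed.

Lemma vtx_idem u : kqmul (vtx u) (vtx u) =1 vtx u.
Proof.
move=> p; rewrite kqmul_vtxl /vtx /Defs.pel /rsrc.
case: eqP => // h; case: eqP => // e; by rewrite e in h.
Qed.

Lemma pel_vtxr q : kqmul (pel q) (vtx (rtgt q)) =1 pel q.
Proof.
move=> p; rewrite kqmul_vtxr /Defs.pel.
case: eqP => // h; case: eqP => // e; by rewrite e in h.
Qed.

Lemma pel_vtxl q : kqmul (vtx (rsrc q)) (pel q) =1 pel q.
Proof.
move=> p; rewrite kqmul_vtxl /Defs.pel.
case: eqP => // h; case: eqP => // e; by rewrite e in h.
Qed.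

Lemma kqsum_eq n F F' : (forall i, (i < n)%N -> F i =1 F' i) -> kqsum n F =1 kqsum n F'.
Proof. by move=> h p; rewrite !kqsumE; apply: eq_bigr => i _; rewrite h. Qed.

Section Ideal.
Variable gs : seq KQ.
Local Notation in_ideal := (in_ideal gs).
Local Notation eqmod := (eqmod gs).
Local Notation G := (nth kq0 gs).

Lemma in_ideal_eq x y : x =1 y -> in_ideal x -> in_ideal y.
Proof.
move=> e [n [a [b [j [H hx]]]]]; exists n, a, b, j; split => // p.
by rewrite -e hx.
Qed.

Lemma in_ideal0 x : x =1 kq0 -> in_ideal x.
Proof. by move=> h; exists 0%N, (fun _ => kq0), (fun _ => kq0), (fun _ => 0%N). Qed.

Lemma in_ideal_add x y : in_ideal x -> in_ideal y -> in_ideal (kqadd x y).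
Proof.
move=> [n1 [a1 [b1 [j1 [H1 h1]]]]] [n2 [a2 [b2 [j2 [H2 h2]]]]].
exists (n1 + n2)%N, (fun i => if (i < n1)%N then a1 i else a2 (i - n1)%N),
  (fun i => if (i < n1)%N then b1 i else b2 (i - n1)%N),
  (fun i => if (i < n1)%N then j1 i else j2 (i - n1)%N); split.
  move=> i hi; case: ifP => hin; first exact: H1.
  by apply: H2; rewrite ltn_subLR // leqNgt hin.
move=> p; rewrite kqsumE big_split_ord /Defs.kqadd h1 h2 !kqsumE /=.
congr (_ + _); apply: eq_bigr => i _; first by rewrite ltn_ord.
by rewrite ltnNge leq_addr /= addKn.
Qed.

Lemma in_ideal_map (f fa fb : KQ -> KQ) :
  (forall x y, x =1 y -> f x =1 f y) ->
  (forall x y, f (kqadd x y) =1 kqadd (f x) (f y)) ->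
  f kq0 =1 kq0 ->
  (forall a, fin_supp a -> fin_supp (fa a)) ->
  (forall b, fin_supp b -> fin_supp (fb b)) ->
  (forall a b j, fin_supp a -> fin_supp b -> (j < size gs)%N ->
     f (kqmul (kqmul a (G j)) b) =1 kqmul (kqmul (fa a) (G j)) (fb b)) ->
  forall x, in_ideal x -> in_ideal (f x).
Proof.
move=> fe fadd f0 ha hb hg x [n [a [b [j [H hx]]]]].
exists n, (fun i => fa (a i)), (fun i => fb (b i)), j; split.
  by move=> i /H [h1 h2 h3]; split; auto.
have fs : forall m F, f (kqsum m F) =1 kqsum m (fun i => f (F i)).
  elim=> [|m IH] F /=; first exact: f0.
  by move=> p; rewrite fadd /Defs.kqadd IH.
move=> p; rewrite (fe _ _ hx) fs; apply: kqsum_eq => i /H [h1 h2 h3].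
exact: hg.
Qed.

Lemma in_ideal_opp x : in_ideal x -> in_ideal (kqopp x).
Proof.
apply: (@in_ideal_map kqopp kqopp id _ _ _ _ _ _ x).
- by move=> y z e p; rewrite /Defs.kqopp e.
- by move=> y z p; rewrite /Defs.kqopp /Defs.kqadd opprD.
- by move=> p; rewrite /Defs.kqopp oppr0.
- exact: fin_supp_opp.
- by [].
move=> a b j _ _ _ p /=.
by rewrite -kqmulNl (kqmul_eql _ (kqmulNl _ _)).
Qed.

Lemma in_ideal_mull c x : fin_supp c -> in_ideal x -> in_ideal (kqmul c x).
Proof.
move=> hc; apply: (@in_ideal_map (kqmul c) (kqmul c) id _ _ _ _ _ _ x).
- by move=> y z e; apply: kqmul_eqr.
- by move=> y z; apply: kqmulDr.
- exact: kqmul0r.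
- by move=> a; apply: fin_supp_mul.
- by [].
move=> a b j _ _ _ p /=.
by rewrite -kqmulA (kqmul_eql _ (fun q => esym (kqmulA _ _ _ q))).
Qed.

Lemma in_ideal_mulr c x : fin_supp c -> in_ideal x -> in_ideal (kqmul x c).
Proof.
move=> hc; apply: (@in_ideal_map (kqmul^~ c) id (kqmul^~ c) _ _ _ _ _ _ x).
- by move=> y z e; apply: kqmul_eql.
- by move=> y z; apply: kqmulDl.
- exact: kqmul0l.
- by [].
- by move=> b hb; apply: fin_supp_mul.
by move=> a b j _ _ _ p /=; rewrite kqmulA.
Qed.

Lemma eqmod_eq x x' y y' : x =1 x' -> y =1 y' -> eqmod x y -> eqmod x' y'.
Proof.
move=> ex ey; apply: in_ideal_eq => p.
by rewrite /Defs.kqadd /Defs.kqopp ex ey.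
Qed.

Lemma eqmod_refl x y : x =1 y -> eqmod x y.
Proof.
by move=> e; apply: in_ideal0 => p; rewrite /Defs.kqadd /Defs.kqopp e subrr.
Qed.

Lemma eqmod_sym x y : eqmod x y -> eqmod y x.
Proof.
move/in_ideal_opp; apply: in_ideal_eq => p.
by rewrite /Defs.kqadd /Defs.kqopp opprD opprK addrC.
Qed.

Lemma eqmod_trans x y z : eqmod x y -> eqmod y z -> eqmod x z.
Proof.
move=> h1 h2; move: (in_ideal_add h1 h2); apply: in_ideal_eq => p.
by rewrite /Defs.kqadd /Defs.kqopp addrA subrK.
Qed.

Lemma eqmod_mull c x y : fin_supp c -> eqmod x y -> eqmod (kqmul c x) (kqmul c y).
Proof.
move=> hc /(in_ideal_mull hc); apply: in_ideal_eq => p.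
by rewrite kqmulDr /Defs.kqadd kqmulNr.
Qed.

Lemma eqmod_mulr c x y : fin_supp c -> eqmod x y -> eqmod (kqmul x c) (kqmul y c).
Proof.
move=> hc /(in_ideal_mulr hc); apply: in_ideal_eq => p.
by rewrite kqmulDl /Defs.kqadd kqmulNl.
Qed.

End Ideal.


Definition lstrip (q : rpath) (x : KQ) : KQ := fun p =>
  if rsrc (val p) == rtgt q then ext x (q.1, q.2 ++ (val p).2) else 0.
Definition rstrip (q : rpath) (x : KQ) : KQ := fun p =>
  if rtgt (val p) == rsrc q then ext x ((val p).1, (val p).2 ++ q.2) else 0.

Lemma ext_lstrip q x r : rvalid q ->
  ext (lstrip q x) r = if r.1 == rtgt q then ext x (q.1, q.2 ++ r.2) else 0.
Proof.
move=> hq; case h: (rvalid r).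
  by rewrite /ext insubT /lstrip /=.
rewrite ext_inv ?h //; case: eqP => // e.
by rewrite ext_inv // rvalid_cat -surjective_pairing hq /= -e -surjective_pairing h.
Qed.

Lemma ext_rstrip q x r : rvalid q ->
  ext (rstrip q x) r = if rtgt r == rsrc q then ext x (r.1, r.2 ++ q.2) else 0.
Proof.
move=> hq; case h: (rvalid r).
  by rewrite /ext insubT /rstrip /=.
rewrite ext_inv ?h //; case: eqP => // e.
rewrite ext_inv // rvalid_cat -surjective_pairing h //.
Qed.

Lemma drop_catl (T : Type) k (s t : seq T) : (k <= size s)%N -> drop k (s ++ t) = drop k s ++ t.
Proof.
rewrite leq_eqVlt => /orP [/eqP ->|h]; first by rewrite drop_size_cat // drop_size.
by rewrite drop_cat h.
Qed.

Lemma lstrip_mul q x y : rvalid q ->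
  (forall k p, (k < size q.2)%N -> rsrc (val p) = rtgt (q.1, take k q.2) -> y p = 0) ->
  lstrip q (kqmul x y) =1 kqmul (lstrip q x) y.
Proof.
move=> hq hy p; rewrite {1}/lstrip kqmulE /M /rsrc; case: (val p) => v s /=.
case: eqP => [ev|nev]; last first.
  by rewrite big1 // => k _; rewrite ext_lstrip //= (introF eqP nev) mul0r.
rewrite ext_mul /M /= size_cat.
set n := size q.2.
rewrite (@big_cat_nat _ _ _ n) //=; last by rewrite -addnS leq_addr.
rewrite big1_seq ?add0r => [|k]; last first.
  move=> /andP [_]; rewrite mem_index_iota => /andP [_ hk].
  rewrite takel_cat ?(ltnW hk) //.
  rewrite (@ext_zero y) ?mulr0 // => p' e.
  by rewrite (hy k p' hk) // /rsrc e.
rewrite -{1}(add0n n) big_addn.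
have -> : ((n + size s).+1 - n = (size s).+1)%N by rewrite -addnS addKn.
apply: eq_big_nat => i _.
rewrite take_cat drop_cat ltnNge leq_addl /= addnK rtgt_cat -surjective_pairing -ev.
by rewrite ext_lstrip //= ev eqxx.
Qed.

Lemma rstrip_mul q x y : rvalid q ->
  (forall k p, (0 < k <= size q.2)%N -> rtgt (val p) = rtgt (q.1, take k q.2) -> x p = 0) ->
  rstrip q (kqmul x y) =1 kqmul x (rstrip q y).
Proof.
move=> hq hx p; rewrite {1}/rstrip kqmulE /M; case: (val p) => v s /=.
case: eqP => [ev|nev]; last first.
  rewrite big1 // => k _; rewrite ext_rstrip //= -rtgt_cat cat_take_drop.
  by rewrite (introF eqP nev) mulr0.
rewrite ext_mul /M /= size_cat.
set n := size q.2.
rewrite (@big_cat_nat _ _ _ (size s).+1) //=; last by rewrite ltnS leq_addr.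
rewrite [X in _ + X]big1_seq ?addr0 => [|k]; last first.
  move=> /andP [_]; rewrite mem_index_iota => /andP [hk1 hk2].
  rewrite take_cat ltnNge ltnW //=.
  rewrite (@ext_zero x) ?mul0r // => p' e.
  rewrite (hx (k - size s)%N p') //.
    by rewrite subn_gt0 hk1 /= leq_subLR -ltnS.
  by rewrite e rtgt_cat ev.
apply: eq_big_nat => k /andP [_ hk].
rewrite takel_cat // drop_catl // ext_rstrip //= -rtgt_cat cat_take_drop ev eqxx.
by [].
Qed.

Lemma lstrip_pel q m : rvalid q -> lstrip q (kqmul (pel q) m) =1 kqmul (vtx (rtgt q)) m.
Proof.
move=> hq p; rewrite kqmul_vtxl /lstrip -[m p]ext_val /rsrc; case: (val p) => v s /=.
case: eqP => // ev.
rewrite ext_mul /M /= size_cat.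
set n := size q.2.
have hn : (n \in index_iota 0 (n + size s).+1) by rewrite mem_index_iota ltnS leq_addr.
rewrite (bigD1_seq _ hn (iota_uniq _ _)) /= big1_seq => [|k /andP [hk hk']].
  rewrite addr0 ext_pel take_size_cat // drop_size_cat // -surjective_pairing eqxx hq.
  by rewrite mul1r ev.
rewrite ext_pel; case: eqP => [e|]; last by rewrite mul0r.
exfalso; move: hk; rewrite mem_index_iota /= ltnS in hk'.
have e2 := congr1 snd e; rewrite /= in e2.
have : size (take k (q.2 ++ s)) = n by rewrite e2.
by rewrite size_takel ?size_cat // => ->; rewrite eqxx.
Qed.

Lemma rstrip_pel q m : rvalid q -> rstrip q (kqmul m (pel q)) =1 kqmul m (vtx (rsrc q)).
Proof.
move=> hq p; rewrite kqmul_vtxr /rstrip -[m p]ext_val; case: (val p) => v s /=.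
case: eqP => // ev.
rewrite ext_mul /M /= size_cat.
set n := size q.2.
have hn : (size s \in index_iota 0 (size s + n).+1) by rewrite mem_index_iota ltnS leq_addr.
rewrite (bigD1_seq _ hn (iota_uniq _ _)) /= big1_seq => [|k /andP [hk hk']].
  rewrite addr0 ext_pel take_size_cat // drop_size_cat // ev /rsrc -surjective_pairing eqxx hq.
  by rewrite mulr1.
rewrite ext_pel; case: eqP => [e|]; last by rewrite mulr0.
exfalso; move: hk; rewrite mem_index_iota /= ltnS in hk'.
have e2 := congr1 snd e; rewrite /= in e2.
have : size (drop k (s ++ q.2)) = n by rewrite e2.
rewrite size_drop size_cat => h; apply/negP; rewrite negbK.
apply/eqP; move: h hk'; rewrite /n; lia.
Qed.


Lemma fin_supp_lstrip q x : fin_supp x -> fin_supp (lstrip q x).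
Proof.
case=> sx hsx.
exists (pmap (fun p : qpath => insub (rtgt q, drop (size q.2) (val p).2)) sx) => p hp.
rewrite /lstrip; case: eqP => // ev.
apply/eqP; apply: contraNT hp => hx.
case: (ext_nz hx) => p1 [e1 h1].
have m1 : p1 \in sx by apply: contraNT h1 => /hsx ->.
rewrite mem_pmap; apply/mapP; exists p1 => //.
by rewrite e1 /= drop_size_cat // -ev /rsrc -surjective_pairing valK.
Qed.

Lemma fin_supp_rstrip q x : fin_supp x -> fin_supp (rstrip q x).
Proof.
case=> sx hsx.
exists (pmap (fun p : qpath => insub ((val p).1, take (size (val p).2 - size q.2) (val p).2)) sx) => p hp.
rewrite /rstrip; case: eqP => // ev.
apply/eqP; apply: contraNT hp => hx.
case: (ext_nz hx) => p1 [e1 h1].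
have m1 : p1 \in sx by apply: contraNT h1 => /hsx ->.
rewrite mem_pmap; apply/mapP; exists p1 => //.
by rewrite e1 /= size_cat addnK take_size_cat // -surjective_pairing valK.
Qed.

Lemma lstrip_eq q x y : x =1 y -> lstrip q x =1 lstrip q y.
Proof. by move=> e p; rewrite /lstrip (ext_eq _ e). Qed.
Lemma rstrip_eq q x y : x =1 y -> rstrip q x =1 rstrip q y.
Proof. by move=> e p; rewrite /rstrip (ext_eq _ e). Qed.
Lemma lstrip_add q x y : lstrip q (kqadd x y) =1 kqadd (lstrip q x) (lstrip q y).
Proof. by move=> p; rewrite /lstrip /Defs.kqadd ext_add; case: ifP; rewrite ?addr0. Qed.
Lemma rstrip_add q x y : rstrip q (kqadd x y) =1 kqadd (rstrip q x) (rstrip q y).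
Proof. by move=> p; rewrite /rstrip /Defs.kqadd ext_add; case: ifP; rewrite ?addr0. Qed.
Lemma lstrip_opp q x : lstrip q (kqopp x) =1 kqopp (lstrip q x).
Proof. by move=> p; rewrite /lstrip /Defs.kqopp ext_opp; case: ifP; rewrite ?oppr0. Qed.
Lemma rstrip_opp q x : rstrip q (kqopp x) =1 kqopp (rstrip q x).
Proof. by move=> p; rewrite /rstrip /Defs.kqopp ext_opp; case: ifP; rewrite ?oppr0. Qed.
Lemma lstrip0 q : lstrip q kq0 =1 kq0.
Proof. by move=> p; rewrite /lstrip ext0; case: ifP. Qed.
Lemma rstrip0 q : rstrip q kq0 =1 kq0.
Proof. by move=> p; rewrite /rstrip ext0; case: ifP. Qed.

Section Iso.
Variables (gs : seq KQ) (R : KQ -> Prop).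
Local Notation G := (nth kq0 gs).
Local Notation eqmod := (eqmod gs).

Lemma rmod_iso_gen q : rvalid q ->
  (forall j k p, (j < size gs)%N -> (k < size q.2)%N ->
     rsrc (val p) = rtgt (q.1, take k q.2) -> G j p = 0) ->
  rmod_iso gs R (vtx (rtgt q)) (pel q).
Proof.
move=> hq hg.
set P := pel q; set e := vtx (rtgt q).
have fP : fin_supp P by exact: fin_supp_pel.
have fe : fin_supp e by exact: fin_supp_vtx.
have hgb : forall j b k p, (j < size gs)%N -> (k < size q.2)%N ->
    rsrc (val p) = rtgt (q.1, take k q.2) -> kqmul (G j) b p = 0.
  move=> j b k p hj hk hp; rewrite kqmulE /M big1 // => l _.
  rewrite (@ext_zero (G j)) ?mul0r // => p' e'.
  by apply: (hg j k) => //; rewrite /rsrc e' /=.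
have idl : forall x, in_ideal gs x -> in_ideal gs (lstrip q x).
  apply: (@in_ideal_map gs (lstrip q) (lstrip q) id).
  - exact: lstrip_eq.
  - exact: lstrip_add.
  - exact: lstrip0.
  - exact: fin_supp_lstrip.
  - by [].
  move=> a b j _ _ hj p /=.
  rewrite (lstrip_eq _ (kqmulA _ _ _)) lstrip_mul //; last first.
    by move=> k p' hk hp'; apply: (hgb j b k).
  by rewrite kqmulA.
have eml : forall x y, eqmod x y -> eqmod (lstrip q x) (lstrip q y).
  move=> x y /idl; apply: in_ideal_eq => p.
  by rewrite lstrip_add /Defs.kqadd lstrip_opp.
have PeP : forall r, kqmul P (kqmul e r) =1 kqmul P r.
  by move=> r p; rewrite -kqmulA; apply: kqmul_eql; exact: pel_vtxr.
have eer : forall r, kqmul e (kqmul e r) =1 kqmul e r.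
  by move=> r p; rewrite -kqmulA; apply: kqmul_eql; exact: vtx_idem.
have hmE : forall m r, eqmod m (kqmul e r) -> eqmod m (kqmul e m).
  move=> m r hm; apply: (eqmod_trans hm).
  apply: eqmod_trans (eqmod_mull fe (eqmod_sym hm)).
  by apply: eqmod_refl => p; rewrite eer.
exists (kqmul P); split; [|split; [|split; [|split; [|split]]]].
- move=> m [r [hr [hR hm]]]; exists r; split => //; split => //.
  apply: eqmod_trans (eqmod_mull fP hm) _.
  by apply: eqmod_refl.
- by move=> m m' _ _; apply: eqmod_mull.
- by move=> m m' _ _; apply: eqmod_refl; apply: kqmulDr.
- by move=> m r _ _ _; apply: eqmod_refl => p; rewrite kqmulA.
- move=> m m' [r [_ [_ hm]]] [r' [_ [_ hm']]] h.
  have h1 := eml _ _ h.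
  have h2 : eqmod (kqmul e m) (kqmul e m').
    by apply: eqmod_eq h1; apply: lstrip_pel.
  apply: eqmod_trans (hmE _ _ hm) _.
  apply: eqmod_trans h2 _.
  exact: eqmod_sym (hmE _ _ hm').
- move=> n [r [hr [hR hn]]]; exists (kqmul e r); split.
    by exists r; split => //; split => //; apply: eqmod_refl.
  apply: eqmod_trans (eqmod_sym hn).
  by apply: eqmod_refl.
Qed.

Lemma lmod_iso_gen q : rvalid q ->
  (forall j k p, (j < size gs)%N -> (0 < k <= size q.2)%N ->
     rtgt (val p) = rtgt (q.1, take k q.2) -> G j p = 0) ->
  lmod_iso gs R (vtx (rsrc q)) (pel q).
Proof.
move=> hq hg.
set P := pel q; set e := vtx (rsrc q).
have fP : fin_supp P by exact: fin_supp_pel.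
have fe : fin_supp e by exact: fin_supp_vtx.
have hag : forall j a k p, (j < size gs)%N -> (0 < k <= size q.2)%N ->
    rtgt (val p) = rtgt (q.1, take k q.2) -> kqmul a (G j) p = 0.
  move=> j a k p hj hk hp; rewrite kqmulE /M big1 // => l _.
  rewrite (@ext_zero (G j)) ?mulr0 // => p' e'.
  apply: (hg j k) => //; rewrite e' -hp.
  by case: (val p) => v s; rewrite /= -rtgt_cat cat_take_drop.
have idl : forall x, in_ideal gs x -> in_ideal gs (rstrip q x).
  apply: (@in_ideal_map gs (rstrip q) id (rstrip q)).
  - exact: rstrip_eq.
  - exact: rstrip_add.
  - exact: rstrip0.
  - by [].
  - exact: fin_supp_rstrip.
  move=> a b j _ _ hj p /=.
  rewrite rstrip_mul //; last first.
    by move=> k p' hk hp'; apply: (hag j a k).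
have eml : forall x y, eqmod x y -> eqmod (rstrip q x) (rstrip q y).
  move=> x y /idl; apply: in_ideal_eq => p.
  by rewrite rstrip_add /Defs.kqadd rstrip_opp.
have PeP : forall r, kqmul (kqmul r e) P =1 kqmul r P.
  by move=> r p; rewrite kqmulA; apply: kqmul_eqr; exact: pel_vtxl.
have eer : forall r, kqmul (kqmul r e) e =1 kqmul r e.
  by move=> r p; rewrite kqmulA; apply: kqmul_eqr; exact: vtx_idem.
have hmE : forall m r, eqmod m (kqmul r e) -> eqmod m (kqmul m e).
  move=> m r hm; apply: (eqmod_trans hm).
  apply: eqmod_trans (eqmod_mulr fe (eqmod_sym hm)).
  by apply: eqmod_refl => p; rewrite eer.
exists (kqmul^~ P); split; [|split; [|split; [|split; [|split]]]].
- move=> m [r [hr [hR hm]]]; exists r; split => //; split => //.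
  apply: eqmod_trans (eqmod_mulr fP hm) _.
  by apply: eqmod_refl.
- by move=> m m' _ _; apply: eqmod_mulr.
- by move=> m m' _ _; apply: eqmod_refl; apply: kqmulDl.
- by move=> m r _ _ _; apply: eqmod_refl => p; rewrite kqmulA.
- move=> m m' [r [_ [_ hm]]] [r' [_ [_ hm']]] h.
  have h1 := eml _ _ h.
  have h2 : eqmod (kqmul m e) (kqmul m' e).
    by apply: eqmod_eq h1; apply: rstrip_pel.
  apply: eqmod_trans (hmE _ _ hm) _.
  apply: eqmod_trans h2 _.
  exact: eqmod_sym (hmE _ _ hm').
- move=> n [r [hr [hR hn]]]; exists (kqmul r e); split.
    by exists r; split => //; split => //; apply: eqmod_refl.
  apply: eqmod_trans (eqmod_sym hn).
  by apply: eqmod_refl.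
Qed.

End Iso.

End Gen.

Lemma map_val_filter n (P : pred nat) :
  map val (filter (fun i : 'I_n => P (val i)) (enum 'I_n)) = filter P (iota 0 n).
Proof. by rewrite -val_enum_ord filter_map. Qed.

Lemma filter_ge_iota m n : (m <= n)%N -> filter (fun k => m <= k)%N (iota 0 n) = iota m (n - m).
Proof.
move=> h; rewrite -{1}(subnKC h) iotaD filter_cat add0n.
rewrite (@eq_in_filter _ _ pred0); last first.
  by move=> k; rewrite mem_iota => /andP [_ hk]; apply/negbTE; rewrite -ltnNge; move: hk; rewrite add0n.
rewrite filter_pred0 /= (@eq_in_filter _ _ predT); last by move=> k; rewrite mem_iota => /andP [].
by rewrite filter_predT.
Qed.

Lemma filter_le_iota m n : (m < n)%N -> filter (fun k => k <= m)%N (iota 0 n) = iota 0 m.+1.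
Proof.
move=> h; rewrite -{1}(subnKC h) iotaD filter_cat add0n.
rewrite (@eq_in_filter _ _ predT); last by move=> k; rewrite mem_iota /= add0n.
rewrite filter_predT (@eq_in_filter _ _ pred0).
  by rewrite filter_pred0 cats0.
by move=> k; rewrite mem_iota => /andP [h1 _] /=; apply/negbTE; rewrite -ltnNge.
Qed.

Section Spec.
Variables (V E : finType) (src tgt : E -> V) (A : nat).
Local Notation sV := (sV V E A).
Local Notation sE := (sE E A).
Local Notation ssrc := (@ssrc V E src A).
Local Notation stgt := (@stgt V E tgt A).

Definition is_new (u : sV) : bool := if u is inr _ then true else false.

Lemma ssrc_new a (i : 'I_A) : val i != 0%N -> is_new (ssrc (a, i)).
Proof.
move=> h; have hlt : ((val i).-1 < A.-1)%N.
  have := ltn_ord i; move: h; rewrite -lt0n -!subn1 /=; lia.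
by rewrite /Defs.ssrc (negbTE h); case: insubP => [//|]; rewrite hlt.
Qed.

Lemma stgt_new a (i : 'I_A) : (val i < A.-1)%N -> is_new (stgt (a, i)).
Proof. by move=> h; rewrite /Defs.stgt insubT. Qed.

Lemma path_str a c : forall (k : nat) (x : 'I_A) (l : seq 'I_A), val x = k ->
  map val l = iota k.+1 c -> path (fun e1 e2 => stgt e1 == ssrc e2) (a, x) (map (pair a) l).
Proof.
elim: c => [|c IH] k x [|y l] //= hx [hy hl].
rewrite (IH k.+1 y l) // andbT /Defs.stgt /Defs.ssrc hy /= -hx.
have hlt : (nat_of_ord x < A.-1)%N by have := ltn_ord y; rewrite hy -hx -subn1; lia.
by case: insubP => [j _ _ //|]; rewrite hlt.
Qed.


Local Notation rvalidS := (rvalid ssrc stgt).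
Local Notation rtgtS := (rtgt stgt).

Lemma ordA (j : 'I_A.-1) : (j.+1 < A)%N.
Proof. by have := ltn_ord j; move: (nat_of_ord j) => m; case: A. Qed.

Lemma qtil_valid a (j : 'I_A.-1) : rvalidS (qtil_raw (inr (a, j))).
Proof.
rewrite /qtil_raw.
set l := filter _ (enum 'I_A).
have hl : map val l = iota j.+1 (A - j.+1).
  rewrite /l (map_val_filter A (fun k => j < k)%N) filter_ge_iota //.
  by have := ordA j; lia.
have hc : (0 < A - j.+1)%N by have := ordA j; lia.
move: hl; case: (A - j.+1)%N hc => // c _.
case: l => [|y l'] //= [hy hl'].
rewrite /Defs.rvalid /=; apply/andP; split; last exact: (path_str a hy hl').
rewrite /Defs.ssrc hy /=.
case: insubP => [j' _ e|]; first by rewrite (val_inj e).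
by rewrite ltn_ord.
Qed.

Lemma ptil_valid a (j : 'I_A.-1) : rvalidS (ptil_raw src (inr (a, j))).
Proof.
rewrite /ptil_raw.
set l := filter _ (enum 'I_A).
have hl : map val l = iota 0 j.+1.
  rewrite /l (map_val_filter A (fun k => k <= j)%N) filter_le_iota //.
  by have := ordA j; lia.
case: l hl => [|y l'] //= [hy hl'].
rewrite /Defs.rvalid /=; apply/andP; split; last exact: (path_str a hy hl').
by rewrite /Defs.ssrc hy.
Qed.

Lemma valid_rtgt_take (w : sV) s k x0 : rvalidS (w, s) -> (k < size s)%N ->
  rtgtS (w, take k s) = ssrc (nth x0 s k).
Proof.
move=> h hk; move: h; rewrite (rvalid_split ssrc stgt w s k) (drop_nth x0 hk) => /andP [_].
by rewrite /Defs.rvalid /= => /andP [/eqP -> _].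
Qed.

Lemma rtgt_take_pos (v : sV) s k x0 : (0 < k <= size s)%N ->
  rtgtS (v, take k s) = stgt (nth x0 s k.-1).
Proof.
case: k => // k /= hk.
by rewrite (take_nth x0 hk) /Defs.rtgt /= map_rcons last_rcons.
Qed.

Lemma qtil_inner (hA : (0 < A)%N) a (j : 'I_A.-1) k :
  (k < size (@qtil_raw V E A (inr (a, j))).2)%N ->
  is_new (rtgtS ((@qtil_raw V E A (inr (a, j))).1, take k (@qtil_raw V E A (inr (a, j))).2)).
Proof.
have hv := qtil_valid a j; move: hv; rewrite /qtil_raw /=.
set s := map _ _ => hv hk.
rewrite (valid_rtgt_take (a, Ordinal hA) hv hk).
have : nth (a, Ordinal hA) s k \in s by exact: mem_nth.
rewrite {2}/s; case/mapP => i; rewrite mem_filter => /andP [hji _] ->.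
apply: ssrc_new; rewrite -lt0n; exact: leq_ltn_trans (leq0n j) hji.
Qed.

Lemma ptil_inner (hA : (0 < A)%N) a (j : 'I_A.-1) k :
  (0 < k <= size (@ptil_raw V E src A (inr (a, j))).2)%N ->
  is_new (rtgtS ((@ptil_raw V E src A (inr (a, j))).1, take k (@ptil_raw V E src A (inr (a, j))).2)).
Proof.
rewrite /ptil_raw /=.
set s := map _ _ => hk.
rewrite (@rtgt_take_pos _ _ _ (a, Ordinal hA) hk).
have : nth (a, Ordinal hA) s k.-1 \in s.
  by apply: mem_nth; case: k hk => // k /andP [_ h].
rewrite {2}/s; case/mapP => i; rewrite mem_filter => /andP [hij _] ->.
apply: stgt_new; exact: leq_ltn_trans hij (ltn_ord j).
Qed.

Lemma theta_src (K : fieldType) x p :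
  is_new (val p).1 -> @theta V E src tgt A K x p = 0.
Proof. by rewrite /theta /destretch; case: (val p) => [[u|u] s] //=. Qed.

Lemma last_enum_ord (T : Type) n (f : 'I_n -> T) x (h : (n.-1 < n)%N) :
  last x (map f (enum 'I_n)) = f (Ordinal h).
Proof.
case: n f h => // n f h.
by rewrite enum_ordSr map_rcons last_rcons; congr f; apply: val_inj.
Qed.

Lemma last_stretch (hA : (0 < A)%N) (b : E) (x : sV) : last x (map stgt (@stretch E A b)) = inl (tgt b).
Proof.
have h : (A.-1 < A)%N by rewrite prednK.
by rewrite /stretch -map_comp (last_enum_ord _ _ h) /= /Defs.stgt insubN //= ltnn.
Qed.

Lemma last_old (hA : (0 < A)%N) s' (x : sV) : ~~ is_new x ->
  ~~ is_new (last x (map stgt (flatten (map (@stretch E A) s')))).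
Proof.
elim: s' x => [|b s' IH] x hx //=.
by rewrite map_cat last_cat; apply: IH; rewrite last_stretch.
Qed.

Lemma theta_tgt (hA : (0 < A)%N) (K : fieldType) x p :
  is_new (rtgtS (val p)) -> @theta V E src tgt A K x p = 0.
Proof.
rewrite /theta /destretch; case: (val p) => [[u|u] s] //=.
case: eqP => // e h; exfalso; move: h; apply/negP.
by rewrite -e /Defs.rtgt /=; apply: last_old.
Qed.

End Spec.

Theorem proposition1p11 (K : fieldType) (V E : finType) (src tgt : E -> V)
  (gs : seq (@KQ K V E src tgt)) (A : nat)
  (hA : (1 <= A)%N)
  (hfin : forall i, (i < size gs)%N -> fin_supp (nth (@kq0 K V E src tgt) gs i))
  (hunif : forall i, (i < size gs)%N -> uniform (nth (@kq0 K V E src tgt) gs i))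
  (hadm : admissible gs)
  (hmin : minimal_gens gs)
  (w : sV V E A) (hw : forall u : V, w <> inl u) :
  let gt := map (@theta V E src tgt A K) gs in
  let v := rsrc (@ptil_raw V E src A w) in
  let v' := rtgt (@stgt V E tgt A) (@qtil_raw V E A w) in
  [/\ rmod_iso gt (@inB V E src tgt A K) (@vtx K _ _ (@ssrc V E src A) (@stgt V E tgt A) v')
                  (@qtil V E src tgt A K w),
      rmod_iso gt (@inLam V E src tgt A K) (@vtx K _ _ (@ssrc V E src A) (@stgt V E tgt A) v')
                  (@qtil V E src tgt A K w),
      lmod_iso gt (@inB V E src tgt A K) (@vtx K _ _ (@ssrc V E src A) (@stgt V E tgt A) v)
                  (@ptil V E src tgt A K w)
    & lmod_iso gt (@inLam V E src tgt A K) (@vtx K _ _ (@ssrc V E src A) (@stgt V E tgt A) v)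
                  (@ptil V E src tgt A K w)].
Proof.
case: w hw => [u|[a j]] hw; first by case: (hw u).
move=> gt v v'.
pose k0 := @kq0 K _ _ (@ssrc V E src A) (@stgt V E tgt A).
have hG : forall j' p, (j' < size gt)%N -> is_new (val p).1 -> nth k0 gt j' p = 0.
  move=> j' p; rewrite size_map => hj hp.
  by rewrite (nth_map (@kq0 K V E src tgt)) //; apply: theta_src.
have hG' : forall j' p, (j' < size gt)%N -> is_new (rtgt (@stgt V E tgt A) (val p)) ->
    nth k0 gt j' p = 0.
  move=> j' p; rewrite size_map => hj hp.
  by rewrite (nth_map (@kq0 K V E src tgt)) //; apply: theta_tgt.
have hr : forall R, rmod_iso gt R (@vtx K _ _ (@ssrc V E src A) (@stgt V E tgt A) v')
                  (@qtil V E src tgt A K (inr (a, j))).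
  move=> R; apply: rmod_iso_gen; first exact: qtil_valid.
  move=> j' k p hj hk hp; apply: hG => //.
  by rewrite /rsrc in hp; rewrite hp; apply: qtil_inner.
have hl : forall R, lmod_iso gt R (@vtx K _ _ (@ssrc V E src A) (@stgt V E tgt A) v)
                  (@ptil V E src tgt A K (inr (a, j))).
  move=> R; apply: lmod_iso_gen; first exact: ptil_valid.
  move=> j' k p hj hk hp; apply: hG' => //.
  by rewrite hp; apply: ptil_inner.
by split.
Qed.
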